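(* Let $(X,\|\cdot\|)$ be a normed space and let $M\subset X$ be c-porous. Then $M$ is strongly lower porous, i.e. for every $x\in M$, $2\liminf_{r\to0^+}\frac{\gamma(x,r,M)}{r}=1$.
   Context: For $x\in X$, $r>0$, $B(x,r)=\{y\in X\colon\|x-y\|<r\}$. For $E\subset X$, $x\in X$, $R>0$, let $\gamma(x,R,E)=\sup\{r>0\colon \exists z\in X,\ B(z,r)\subset B(x,R)\setminus E\}$. The lower porosity of $E$ at $x$ is $2\liminf_{r\to0^+}\gamma(x,r,E)/r$; $E$ is strongly lower porous if its lower porosity equals $1$ at each point of $E$. A set $M\subset X$ is c-porous if for every $x\in X$ and every $r>0$ there exist $y\in B(x,r)$ and a non-zero continuous linear functional $\phi\colon X\to\mathbb R$ such that $\{z\in X\colon\phi(z)>\phi(y)\}\cap M=\emptyset$. *)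

(* Defs.v *)
From HB Require Import structures.
From mathcomp Require Import all_boot all_order all_algebra.
From mathcomp Require Import all_classical all_reals all_analysis.
Set Implicit Arguments. Unset Strict Implicit. Unset Printing Implicit Defensive.
Import Order.TTheory GRing.Theory Num.Theory.
Import numFieldNormedType.Exports.
Local Open Scope classical_set_scope.
Local Open Scope ring_scope.

Definition oball (R : realType) (X : normedModType R) (x : X) (r : R) : set X :=
  [set y | `|x - y| < r].

Definition gamma (R : realType) (X : normedModType R) (x : X) (R0 : R) (E : set X)
  : \bar R :=
  ereal_sup [set r%:E | r in [set r : R | 0 < r /\
     exists z : X, oball z r `<=` oball x R0 `\` E]].

Definition lower_porosity (R : realType) (X : normedModType R) (E : set X) (x : X)
  : \bar R :=
  (2%:E * limf_einf (fun r : R => gamma x r E * (r^-1)%:E) (0^'+))%E.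

Definition strongly_lower_porous (R : realType) (X : normedModType R) (E : set X) :=
  forall x, E x -> lower_porosity E x = 1%E.

Definition c_porous (R : realType) (X : normedModType R) (M : set X) :=
  forall (x : X) (r : R), 0 < r ->
    exists y : X, oball x r y /\
      exists phi : {linear X -> R^o},
        continuous phi /\ (exists v, phi v != 0) /\
        [set z | phi y < phi z] `&` M = set0.

(* Main.v *)
Require Import Defs.
From HB Require Import structures.
From mathcomp Require Import all_boot all_order all_algebra.
From mathcomp Require Import all_classical all_reals all_analysis.
From mathcomp Require Import ring lra.
Import Order.TTheory GRing.Theory Num.Theory.
Import numFieldNormedType.Exports.
Local Open Scope classical_set_scope.
Local Open Scope ring_scope.

Section S.
Variables (R : realType) (X : normedModType R).

Lemma gamma_le (x : X) (r : R) (M : set X) : M x -> (gamma x r M <= (r/2)%:E)%E.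
Proof.
move=> Mx; apply: ge_ereal_sup => _ [s [s0 [z zs]] <-]; rewrite lee_fin.
rewrite leNgt; apply/negP => hs.
have r0 : 0 < r.
  have : oball z s z by rewrite /oball /= subrr normr0.
  move=> /zs [] /=; rewrite /oball /=; move=> h _; exact: le_lt_trans h.
have zx : s <= `|z - x|.
  rewrite leNgt; apply/negP => h.
  by have [_ /(_ Mx)] := zs x h.
have zx0 : 0 < `|z - x| by apply: lt_le_trans zx.
set e := `|z - x|^-1 *: (z - x).
have ne : `|e| = 1 by rewrite /e normrZ normrV ?unitfE ?gt_eqF // ger0_norm ?invr_ge0 // mulVf // gt_eqF.
set w := z + (r/2) *: e.
have : oball z s w.
  rewrite /oball /=. have -> : z - w = - ((r/2) *: e) by rewrite /w opprD addrA subrr add0r.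
  rewrite normrN normrZ ne mulr1.
  by rewrite ger0_norm; lra.
move=> /zs [] ; rewrite /oball /=.
have -> : x - w = - ((`|z - x| + r/2) *: e).
  have ze : z - x = `|z - x| *: e by rewrite /e scalerA mulfV ?gt_eqF // scale1r.
  have xe : x = z - `|z - x| *: e by rewrite -ze opprB addrCA subrr addr0.
  rewrite {1}xe.
  by rewrite /w scalerDl !opprD !addrA (addrAC z) subrr add0r.
rewrite normrN normrZ ne mulr1 ger0_norm; first lra.
rewrite addr_ge0 //; last by apply: ltW; lra.
Qed.

Lemma phi_sup (phi : {linear X -> R^o}) : continuous phi -> (exists v, phi v != 0) ->
  exists N : R, 0 < N /\ (forall v, phi v <= N * `|v|) /\
    (forall e, 0 < e -> exists u, `|u| <= 1 /\ N - e < phi u).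
Proof.
move=> cphi [v0 hv0].
have /bounded_funP /(_ 1) [B hB] : bounded_near phi (nbhs (0 : X)).
  by apply/linear_bounded_continuous.
set S := [set phi v | v in [set v : X | `|v| <= 1]].
have hS : has_sup S.
  split; first by exists (phi 0); exists 0 => //=; rewrite normr0.
  exists B => _ [v /= v1 <-]; apply: le_trans (hB v v1); exact: ler_norm.
have ub := sup_upper_bound hS.
have bnd : forall v, phi v <= sup S * `|v|.
  move=> v; have [->|vn0] := eqVneq v 0; first by rewrite linear0 normr0 mulr0.
  have nv : 0 < `|v| by rewrite normr_gt0.
  have : phi (`|v|^-1 *: v) <= sup S.
    apply: ub; exists (`|v|^-1 *: v) => //=.
    by rewrite normrZ ger0_norm ?invr_ge0 ?normr_ge0 // mulVf ?gt_eqF.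
  rewrite linearZZ => h.
  by rewrite -ler_pdivrMr // mulrC; exact: h.
exists (sup S); split; last split => //.
  have v0n : v0 != 0 by apply: contra hv0 => /eqP ->; rewrite linear0.
  have nv : 0 < `|v0| by rewrite normr_gt0.
  set v' := `|v0|^-1 *: v0.
  have n1 : `|v'| <= 1.
    by rewrite normrZ ger0_norm ?invr_ge0 ?normr_ge0 // mulVf ?gt_eqF.
  have h1 : phi v' <= sup S by apply: ub; exists v'.
  have h2 : phi (- v') <= sup S by apply: ub; exists (- v') => //=; rewrite normrN.
  have hv' : phi v' != 0.
    by rewrite /v' linearZZ mulf_neq0 // invr_neq0 // gt_eqF.
  rewrite linearN /= in h2.
  have : 0 < `|phi v'| by rewrite normr_gt0.
  move: h1 h2; case: (ger0P (phi v')) => _; lra.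
move=> e e0; have [_ [u /= u1 <-] hu] := sup_adherent e0 hS.
by exists u.
Qed.

Lemma in_set_s (M : set X) (x : X) (r s : R) : c_porous M -> 0 < s -> s < r / 2 ->
  exists z : X, oball z s `<=` oball x r `\` M.
Proof.
move=> cM s0 sr.
set d := r / 2 - s.
have d0 : 0 < d by rewrite /d subr_gt0.
have [y [xy [phi [cphi [nz H]]]]] := cM x (d / 2) (divr_gt0 d0 (ltr0Sn _ 1)).
have [N [N0 [bnd adh]]] := @phi_sup phi cphi nz.
have r0 : 0 < r by lra.
have e0 : 0 < N * d / r by rewrite divr_gt0 // mulr_gt0.
have [u [u1 hu]] := adh _ e0.
exists (x + (r / 2) *: u) => w hw; rewrite /oball /= in hw xy.
split.
  rewrite /oball /=; apply: (le_lt_trans (ler_distD (x + (r / 2) *: u) _ _)).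
  rewrite opprD addrA subrr sub0r normrN normrZ ger0_norm; last lra.
  have : r / 2 * `|u| <= r / 2 by rewrite ler_piMr //; lra.
  lra.
move=> Mw.
suff : ([set z | phi y < phi z] `&` M) w by rewrite H.
split => //=.
have f1 := bnd (y - x); rewrite linearB /= in f1.
have f2 : N * `|y - x| <= N * (d / 2).
  by rewrite ler_wpM2l ?ltW // distrC.
have f3 := bnd (x + (r / 2) *: u - w).
rewrite linearB linearD linearZZ /= in f3.
have f4 : N * `|x + (r / 2) *: u - w| <= N * s by rewrite ler_wpM2l ?ltW //; apply: ltW.
have f5 : r / 2 * (N - N * d / r) < r / 2 * phi u by rewrite ltr_pM2l //; lra.
have f6 : r / 2 * (N - N * d / r) = N * (r / 2) - N * (d / 2) by field; lra.
have f7 : N * d = N * (r / 2) - N * s by rewrite /d mulrBr.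
have f8 : (r / 2) *: phi u = r / 2 * phi u by [].
lra.
Qed.

Lemma gamma_eq (M : set X) (x : X) (r : R) : c_porous M -> M x -> 0 < r ->
  gamma x r M = (r / 2)%:E.
Proof.
move=> cM Mx r0; apply/eqP; rewrite eq_le gamma_le //=.
have key : forall s, 0 < s -> s < r / 2 -> (s%:E <= gamma x r M)%E.
  move=> s s0 sr; apply: ereal_sup_ubound; exists s => //; split => //.
  exact: in_set_s.
rewrite leNgt; apply/negP.
case E : (gamma x r M) => [g| |] //.
- rewrite lte_fin => glt.
  set m := Num.max g (r / 4).
  have h1 : g <= m by rewrite le_max lexx.
  have h2 : r / 4 <= m by rewrite le_max lexx orbT.
  have h3 : m < r / 2 by rewrite gt_max glt /=; lra.
  have := key ((m + r / 2) / 2) ltac:(lra) ltac:(lra).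
  rewrite E lee_fin; lra.
- move=> _; have := key (r / 4) ltac:(lra) ltac:(lra).
  by rewrite E.
Qed.
End S.

Theorem corollary2p3 (R : realType) (X : normedModType R) (M : set X) :
  c_porous M -> strongly_lower_porous M.
Proof.
move=> cM x Mx; rewrite /lower_porosity.
set f := (fun r : R => (gamma x r M * (r^-1)%:E)%E).
have fE : forall r, 0 < r -> f r = (2^-1)%:E.
  move=> r r0; rewrite /f gamma_eq // -EFinM; congr EFin.
  by field; lra.
suff -> : limf_einf f (0^'+) = (2^-1)%:E.
  by rewrite -EFinM mulfV.
rewrite limf_einfE; apply/eqP; rewrite eq_le; apply/andP; split.
- apply: ge_ereal_sup => _ [V FV <-].
  have : \forall t \near (0:R)^'+, V t /\ 0 < t.
    by apply: filterI => //; exact: nbhs_right_gt.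
  move=> /filter_ex [t [Vt t0]].
  by apply: ge_ereal_inf; exists (f t); [exists t | rewrite fE].
- apply: le_ereal_sup_tmp; exists (ereal_inf (f @` [set t | 0 < t])).
    by exists [set t | 0 < t] => //; exact: nbhs_right_gt.
  apply: le_ereal_inf_tmp => _ [t t0 <-]; by rewrite fE.
Qed.
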